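(* Let $A\le B$ be quasi-copulas on $[0,1]^2$. Then there exists a copula $C$ with $A\le C\le B$ if and only if $L^{(A,B)}(R)\ge0$ for all $R\in\mathfrak{R}$.
   Context: For $Q:[0,1]^2\to\mathbb{R}$, $V_Q([s_1,s_2]\times[t_1,t_2])=Q(s_1,t_1)+Q(s_2,t_2)-Q(s_2,t_1)-Q(s_1,t_2)$. A copula is grounded ($Q(x,0)=Q(0,y)=0$), has neutral element 1 ($Q(x,1)=x$, $Q(1,y)=y$) and $V_Q(R)\ge0$ for all rectangles in $[0,1]^2$; a quasi-copula is grounded, has neutral element $1$, and $V_Q(R)\ge0$ for rectangles having a side on the boundary of $[0,1]^2$. A rectangle is $[s_1,s_2]\times[t_1,t_2]\subseteq[0,1]^2$ with $s_1<s_2$, $t_1<t_2$; main corners: southwest and northeast; opposite corners: southeast and northwest. $\mathfrak{R}$: finite formal unions $R=R_1\sqcup\dots\sqcup R_n$ of rectangles (repetitions allowed), with multiplicity $m_R(\mathbf{y})=\sum_i m_{R_i}(\mathbf{y})$, where $m_{R_i}(\mathbf{y})$ is $1$ at main corners, $-1$ at opposite corners, $0$ elsewhere. $L^{(A,B)}(R)=\sum_{m_R(\mathbf{y})>0}B(\mathbf{y})m_R(\mathbf{y})+\sum_{m_R(\mathbf{y})<0}A(\mathbf{y})m_R(\mathbf{y})$. *)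

(* Defs.v *)
From Stdlib Require Import Reals List ZArith.
Import ListNotations.
Open Scope R_scope.

Definition in01 (x : R) : Prop := 0 <= x <= 1.

Definition VQ (Q : R -> R -> R) (s1 s2 t1 t2 : R) : R :=
  Q s1 t1 + Q s2 t2 - Q s2 t1 - Q s1 t2.

Definition grounded (Q : R -> R -> R) : Prop :=
  forall x, in01 x -> Q x 0 = 0 /\ Q 0 x = 0.

Definition neutral1 (Q : R -> R -> R) : Prop :=
  forall x, in01 x -> Q x 1 = x /\ Q 1 x = x.

Definition rect : Type := (R * R * R * R)%type.

Definition is_rect (r : rect) : Prop :=
  let '(s1, s2, t1, t2) := r in
  0 <= s1 /\ s1 < s2 /\ s2 <= 1 /\ 0 <= t1 /\ t1 < t2 /\ t2 <= 1.

Definition is_copula (Q : R -> R -> R) : Prop :=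
  grounded Q /\ neutral1 Q /\
  forall s1 s2 t1 t2, is_rect (s1, s2, t1, t2) -> VQ Q s1 s2 t1 t2 >= 0.

Definition is_quasi_copula (Q : R -> R -> R) : Prop :=
  grounded Q /\ neutral1 Q /\
  forall s1 s2 t1 t2, is_rect (s1, s2, t1, t2) ->
    (s1 = 0 \/ s2 = 1 \/ t1 = 0 \/ t2 = 1) -> VQ Q s1 s2 t1 t2 >= 0.

Definition le01 (P Q : R -> R -> R) : Prop :=
  forall x y, in01 x -> in01 y -> P x y <= Q x y.

Definition pt : Type := (R * R)%type.

Definition pt_eq_dec (p q : pt) : {p = q} + {p <> q}.
Proof.
  destruct p as [a b], q as [c d].
  destruct (Req_EM_T a c) as [H1|H1]; destruct (Req_EM_T b d) as [H2|H2].
  - left; subst; reflexivity.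
  - right; intros H; inversion H; contradiction.
  - right; intros H; inversion H; contradiction.
  - right; intros H; inversion H; contradiction.
Defined.

Definition mult_rect (r : rect) (y : pt) : Z :=
  let '(s1, s2, t1, t2) := r in
  ((if pt_eq_dec y (s1, t1) then 1 else 0)
   + (if pt_eq_dec y (s2, t2) then 1 else 0)
   - (if pt_eq_dec y (s2, t1) then 1 else 0)
   - (if pt_eq_dec y (s1, t2) then 1 else 0))%Z.

(* A formal union R_1 ⊔ ... ⊔ R_n is a list of rectangles (repetitions allowed). *)
Definition funion : Type := list rect.

Definition is_funion (U : funion) : Prop := Forall is_rect U.

Definition mult (U : funion) (y : pt) : Z :=
  fold_right (fun r acc => (mult_rect r y + acc)%Z) 0%Z U.

Definition corners (r : rect) : list pt :=
  let '(s1, s2, t1, t2) := r in [(s1, t1); (s2, t2); (s2, t1); (s1, t2)].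

Definition support_pts (U : funion) : list pt :=
  nodup pt_eq_dec (flat_map corners U).

Definition Lterm (A B : R -> R -> R) (U : funion) (y : pt) : R :=
  let m := mult U y in
  if Z_lt_dec 0 m then B (fst y) (snd y) * IZR m
  else if Z_lt_dec m 0 then A (fst y) (snd y) * IZR m
  else 0.

Definition L_AB (A B : R -> R -> R) (U : funion) : R :=
  fold_right (fun y acc => Lterm A B U y + acc) 0 (support_pts U).

(* Main.v *)
Require Import Defs.
From Stdlib Require Import Reals List ZArith Lra Lia Permutation ClassicalEpsilon Classical FunctionalExtensionality.
Import ListNotations.
Open Scope R_scope.

Definition fsum (l : list pt) (h : pt -> R) : R := fold_right (fun y acc => h y + acc) 0 l.
Definition sumS (sp : list pt) (h : pt -> R) : R := fsum (nodup pt_eq_dec sp) h.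

Lemma fsum_filter l h :
  fsum l h = fsum (filter (fun y => if Req_EM_T (h y) 0 then false else true) l) h.
Proof.
  induction l as [|a l IH]; simpl; auto.
  destruct (Req_EM_T (h a) 0) as [E|E]; simpl; rewrite IH; [rewrite E; ring| reflexivity].
Qed.

Lemma fsum_perm l l' h : Permutation l l' -> fsum l h = fsum l' h.
Proof.
  induction 1; simpl; try lra.
Qed.

Lemma sumS_indep sp1 sp2 h :
  (forall y, h y <> 0 -> In y sp1) -> (forall y, h y <> 0 -> In y sp2) ->
  sumS sp1 h = sumS sp2 h.
Proof.
  intros H1 H2. unfold sumS. rewrite (fsum_filter (nodup _ sp1)), (fsum_filter (nodup _ sp2)).
  apply fsum_perm. apply NoDup_Permutation; try (apply NoDup_filter, NoDup_nodup).
  intro x. rewrite !filter_In, !nodup_In.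
  destruct (Req_EM_T (h x) 0) as [E|E]; split; intros [_ F]; try discriminate; split; auto.
Qed.

Lemma fsum_ext l h1 h2 : (forall y, In y l -> h1 y = h2 y) -> fsum l h1 = fsum l h2.
Proof.
  induction l as [|a l IH]; simpl; intros H; auto.
  rewrite H by auto. rewrite IH; auto.
Qed.

Lemma sumS_ext sp h1 h2 : (forall y, In y sp -> h1 y = h2 y) -> sumS sp h1 = sumS sp h2.
Proof.
  intros H; apply fsum_ext; intros y Hy; apply H; apply nodup_In in Hy; auto.
Qed.

Lemma fsum_le l h1 h2 : (forall y, In y l -> h1 y <= h2 y) -> fsum l h1 <= fsum l h2.
Proof.
  induction l as [|a l IH]; simpl; intros H; [lra|].
  assert (h1 a <= h2 a) by auto. assert (fsum l h1 <= fsum l h2) by auto. lra.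
Qed.

Lemma sumS_le sp h1 h2 : (forall y, In y sp -> h1 y <= h2 y) -> sumS sp h1 <= sumS sp h2.
Proof.
  intros H; apply fsum_le; intros y Hy; apply H; apply nodup_In in Hy; auto.
Qed.

Lemma sumS_plus sp h1 h2 : sumS sp (fun y => h1 y + h2 y) = sumS sp h1 + sumS sp h2.
Proof.
  unfold sumS. induction (nodup pt_eq_dec sp); simpl; lra.
Qed.

Lemma sumS_scal sp a h : sumS sp (fun y => a * h y) = a * sumS sp h.
Proof.
  unfold sumS. induction (nodup pt_eq_dec sp); simpl; [ring|]. rewrite IHl; ring.
Qed.

Lemma sumS_delta sp p a : In p sp ->
  sumS sp (fun y => if pt_eq_dec y p then a else 0) = a.
Proof.
  intros Hp. rewrite (sumS_indep sp [p]).
  - unfold sumS, fsum. simpl. destruct (pt_eq_dec p p); [ring|congruence].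
  - intros y. destruct (pt_eq_dec y p); [subst; auto|lra].
  - intros y. destruct (pt_eq_dec y p); [subst; simpl; auto|lra].
Qed.

Lemma sumS_zero sp : sumS sp (fun _ => 0) = 0.
Proof. unfold sumS. induction (nodup pt_eq_dec sp); simpl; lra. Qed.

Definition rho (A B : R -> R -> R) (y : pt) (m : Z) : R :=
  if Z_lt_dec 0 m then B (fst y) (snd y) * IZR m
  else if Z_lt_dec m 0 then A (fst y) (snd y) * IZR m else 0.

Definition psum A B sp (F : pt -> Z) := sumS sp (fun y => rho A B y (F y)).
Definition lsum (c : pt -> R) sp (F : pt -> Z) := sumS sp (fun y => c y * IZR (F y)).

Lemma rho0 A B y : rho A B y 0 = 0.
Proof. unfold rho. destruct (Z_lt_dec 0 0); [lia|]. destruct (Z_lt_dec 0 0); [lia|auto]. Qed.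

Lemma rho_max A B y m : A (fst y) (snd y) <= B (fst y) (snd y) ->
  rho A B y m = Rmax (B (fst y) (snd y) * IZR m) (A (fst y) (snd y) * IZR m).
Proof.
  intros H. unfold rho. destruct (Z_lt_dec 0 m) as [h|h].
  - apply IZR_lt in h. rewrite Rmax_left; auto. nra.
  - destruct (Z_lt_dec m 0) as [h'|h'].
    + apply IZR_lt in h'. rewrite Rmax_right; auto. nra.
    + assert (m = 0%Z) by lia. subst. rewrite Rmax_left; simpl; lra.
Qed.

Lemma rho_sub A B y m1 m2 : A (fst y) (snd y) <= B (fst y) (snd y) ->
  rho A B y (m1 + m2) <= rho A B y m1 + rho A B y m2.
Proof.
  intros H. rewrite !rho_max by auto. rewrite plus_IZR.
  set (b := B (fst y) (snd y)). set (a := A (fst y) (snd y)).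
  pose proof (Rmax_l (b * IZR m1) (a * IZR m1)). pose proof (Rmax_r (b * IZR m1) (a * IZR m1)).
  pose proof (Rmax_l (b * IZR m2) (a * IZR m2)). pose proof (Rmax_r (b * IZR m2) (a * IZR m2)).
  apply Rmax_lub; lra.
Qed.

Lemma rho_scal A B y (n : nat) m : A (fst y) (snd y) <= B (fst y) (snd y) ->
  rho A B y (Z.of_nat n * m) = INR n * rho A B y m.
Proof.
  intros H. rewrite !rho_max by auto. rewrite mult_IZR, <- INR_IZR_INZ.
  rewrite <- RmaxRmult by apply pos_INR. f_equal; ring.
Qed.

Lemma rho_ge A B y (c : R) m : A (fst y) (snd y) <= c -> c <= B (fst y) (snd y) ->
  c * IZR m <= rho A B y m.
Proof.
  intros H1 H2. unfold rho. destruct (Z_lt_dec 0 m) as [h|h].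
  - apply IZR_lt in h. nra.
  - destruct (Z_lt_dec m 0) as [h'|h'].
    + apply IZR_lt in h'. nra.
    + assert (m = 0%Z) by lia. subst. simpl; lra.
Qed.

Definition sq (y : pt) : Prop := in01 (fst y) /\ in01 (snd y).
Definition ABok (A B : R -> R -> R) := forall y, sq y -> A (fst y) (snd y) <= B (fst y) (snd y).

Lemma psum_sub A B sp F G : ABok A B -> Forall sq sp ->
  psum A B sp (fun y => (F y + G y)%Z) <= psum A B sp F + psum A B sp G.
Proof.
  intros Hab Hsp. unfold psum. rewrite <- sumS_plus. apply sumS_le.
  intros y Hy. apply rho_sub. apply Hab. rewrite Forall_forall in Hsp; auto.
Qed.

Lemma psum_scal A B sp (n : nat) F : ABok A B -> Forall sq sp ->
  psum A B sp (fun y => (Z.of_nat n * F y)%Z) = INR n * psum A B sp F.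
Proof.
  intros Hab Hsp. unfold psum. rewrite <- sumS_scal. apply sumS_ext.
  intros y Hy. apply rho_scal. apply Hab. rewrite Forall_forall in Hsp; auto.
Qed.

Lemma psum_indep A B sp1 sp2 F :
  (forall y, F y <> 0%Z -> In y sp1) -> (forall y, F y <> 0%Z -> In y sp2) ->
  psum A B sp1 F = psum A B sp2 F.
Proof.
  intros H1 H2. apply sumS_indep; intros y Hy; [apply H1|apply H2]; intro E; rewrite E, rho0 in Hy; lra.
Qed.

Lemma psum_ext A B sp F G : (forall y, F y = G y) -> psum A B sp F = psum A B sp G.
Proof. intros H. replace G with F; auto. apply functional_extensionality; auto. Qed.

Lemma lsum_ext c sp F G : (forall y, F y = G y) -> lsum c sp F = lsum c sp G.
Proof. intros H. replace G with F; auto. apply functional_extensionality; auto. Qed.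

Lemma lsum_indep c sp1 sp2 F :
  (forall y, F y <> 0%Z -> In y sp1) -> (forall y, F y <> 0%Z -> In y sp2) ->
  lsum c sp1 F = lsum c sp2 F.
Proof.
  intros H1 H2. apply sumS_indep; intros y Hy; [apply H1|apply H2]; intro E; rewrite E in Hy; simpl in Hy; lra.
Qed.

Lemma lsum_plus c sp F G : lsum c sp (fun y => (F y + G y)%Z) = lsum c sp F + lsum c sp G.
Proof.
  unfold lsum. rewrite <- sumS_plus. apply sumS_ext. intros. rewrite plus_IZR; ring.
Qed.

Lemma lsum_scal c sp k F : lsum c sp (fun y => (k * F y)%Z) = IZR k * lsum c sp F.
Proof.
  unfold lsum. rewrite <- sumS_scal. apply sumS_ext. intros. rewrite mult_IZR; ring.
Qed.

Lemma lsum_opp c sp F : lsum c sp (fun y => (- F y)%Z) = - lsum c sp F.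
Proof.
  rewrite (lsum_ext c sp _ (fun y => (-1 * F y)%Z)) by (intros; ring).
  rewrite lsum_scal. simpl. ring.
Qed.

Definition dlt (p : pt) : pt -> Z := fun y => if pt_eq_dec y p then 1%Z else 0%Z.

Lemma lsum_dlt c sp p : In p sp -> lsum c sp (dlt p) = c p.
Proof.
  intros H. unfold lsum, dlt. rewrite <- (sumS_delta sp p (c p) H). apply sumS_ext.
  intros y _. destruct (pt_eq_dec y p); subst; simpl; ring.
Qed.

Lemma mult_cons r U y : mult (r :: U) y = (mult_rect r y + mult U y)%Z.
Proof. reflexivity. Qed.

Lemma mult_app U V y : mult (U ++ V) y = (mult U y + mult V y)%Z.
Proof. induction U; simpl; [lia|]. rewrite IHU. lia. Qed.

Fixpoint rep (n : nat) (U : funion) : funion :=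
  match n with O => [] | S n => U ++ rep n U end.

Lemma mult_rep n U y : mult (rep n U) y = (Z.of_nat n * mult U y)%Z.
Proof. induction n; simpl rep; [reflexivity|]. rewrite mult_app, IHn. lia. Qed.

Lemma funion_app U V : is_funion U -> is_funion V -> is_funion (U ++ V).
Proof. unfold is_funion; intros; apply Forall_app; auto. Qed.

Lemma funion_rep n U : is_funion U -> is_funion (rep n U).
Proof. induction n; simpl; intros; [constructor|]. apply funion_app; auto. Qed.

Lemma corners_rep n U y : In y (flat_map corners (rep n U)) -> In y (flat_map corners U).
Proof.
  induction n; simpl; [tauto|]. rewrite flat_map_app, in_app_iff. intuition.
Qed.

Lemma corners_rep' n U y : (0 < n)%nat -> In y (flat_map corners U) -> In y (flat_map corners (rep n U)).
Proof.
  destruct n; [lia|]. simpl. rewrite flat_map_app, in_app_iff. auto.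
Qed.

Lemma mult_rect_dlt r y : mult_rect r y =
  (let '(s1, s2, t1, t2) := r in dlt (s1,t1) y + dlt (s2,t2) y - dlt (s2,t1) y - dlt (s1,t2) y)%Z.
Proof. destruct r as [[[? ?] ?] ?]. reflexivity. Qed.

Lemma mult_rect_supp r y : mult_rect r y <> 0%Z -> In y (corners r).
Proof.
  rewrite mult_rect_dlt. destruct r as [[[s1 s2] t1] t2]. unfold dlt. simpl.
  destruct (pt_eq_dec y (s1,t1)); auto.
  destruct (pt_eq_dec y (s2,t2)); auto.
  destruct (pt_eq_dec y (s2,t1)); auto.
  destruct (pt_eq_dec y (s1,t2)); auto. lia.
Qed.

Lemma mult_supp U y : mult U y <> 0%Z -> In y (flat_map corners U).
Proof.
  induction U; simpl; [lia|]. intros H. rewrite in_app_iff.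
  destruct (Z.eq_dec (mult_rect a y) 0); [right; apply IHU; lia| left; apply mult_rect_supp; auto].
Qed.

Lemma corners_sq U : is_funion U -> Forall sq (flat_map corners U).
Proof.
  intros H. apply Forall_forall. intros y Hy. apply in_flat_map in Hy as [r [Hr Hy]].
  unfold is_funion in H. rewrite Forall_forall in H. specialize (H r Hr).
  destruct r as [[[s1 s2] t1] t2]. simpl in H, Hy. unfold sq, in01.
  intuition; subst; simpl; lra.
Qed.

Lemma lsum_rect c sp r : incl (corners r) sp ->
  lsum c sp (mult_rect r) =
  (let '(s1, s2, t1, t2) := r in c (s1,t1) + c (s2,t2) - c (s2,t1) - c (s1,t2)).
Proof.
  intros H. rewrite (lsum_ext c sp _ _ (mult_rect_dlt r)).
  destruct r as [[[s1 s2] t1] t2]. unfold incl in H. simpl in H.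
  rewrite (lsum_ext c sp _ (fun y => (dlt (s1, t1) y + dlt (s2, t2) y + (- dlt (s2, t1) y) + (- dlt (s1, t2) y))%Z)) by (intros; lia).
  rewrite !lsum_plus, !lsum_opp, !lsum_dlt by (apply H; tauto). ring.
Qed.

Lemma div_le1 v x a : 0 < a -> v <= x / a -> v * a <= x.
Proof.
  intros Ha H. apply Rmult_le_compat_r with (r := a) in H; [|lra].
  unfold Rdiv in H. rewrite Rmult_assoc, Rinv_l, Rmult_1_r in H; lra.
Qed.

Lemma div_le2 v x a : 0 < a -> x / a <= v -> x <= v * a.
Proof.
  intros Ha H. apply Rmult_le_compat_r with (r := a) in H; [|lra].
  unfold Rdiv in H. rewrite Rmult_assoc, Rinv_l, Rmult_1_r in H; lra.
Qed.

Lemma div_cross x y s t : 0 < s -> 0 < t -> x * t <= y * s -> x / s <= y / t.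
Proof.
  intros Hs Ht H.
  apply (Rmult_le_reg_r (s * t)); [nra|].
  replace (x / s * (s * t)) with (x * t) by (field; lra).
  replace (y / t * (s * t)) with (y * s) by (field; lra). auto.
Qed.

Definition upd (c : pt -> R) (z : pt) (v : R) : pt -> R :=
  fun y => if pt_eq_dec y z then v else c y.

Definition Inv A B (c : pt -> R) (S : list pt) : Prop :=
  Forall sq S /\
  forall (f : pt -> Z) (U : funion), is_funion U -> (forall y, f y <> 0%Z -> In y S) ->
    lsum c S f <= psum A B (S ++ flat_map corners U) (fun y => (f y + mult U y)%Z).

Lemma dlt_supp k z y : (k * dlt z y <> 0)%Z -> y = z.
Proof. unfold dlt. destruct (pt_eq_dec y z); auto. lia. Qed.

Ltac supp_tac :=
  let y := fresh "y" in let Hy := fresh "Hy" in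
  intros y Hy;
  repeat first [ rewrite in_app_iff | rewrite mult_app in Hy | rewrite mult_rep in Hy | progress simpl ];
  repeat match goal with
  | HU : is_funion ?U |- _ =>
      lazymatch goal with
      | _ : mult U y <> 0%Z |- _ => fail
      | _ : mult U y = 0%Z |- _ => fail
      | _ => let h := fresh in destruct (Z.eq_dec (mult U y) 0) as [|h];
             [ | pose proof (mult_supp U y h) ]
      end
  | f : pt -> Z, H : forall y, ?f y <> 0%Z -> In y ?S |- _ =>
      lazymatch goal with
      | _ : f y <> 0%Z |- _ => fail
      | _ : f y = 0%Z |- _ => fail
      | _ => let h := fresh in destruct (Z.eq_dec (f y) 0) as [|h];
             [ | pose proof (H y h) ]
      end
  end;
  unfold dlt in *; try destruct (pt_eq_dec y _); subst; try tauto; try lia; try (intuition auto).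

Lemma step A B c S z : ABok A B -> Inv A B c S -> sq z -> ~ In z S ->
  exists v, Inv A B (upd c z v) (z :: S).
Proof.
  intros Hab [HS HI] Hz Hn.
  set (Up := fun u => exists f U t, is_funion U /\ (forall y, f y <> 0%Z -> In y S) /\ (0 < t)%nat /\
    u = (psum A B (S ++ z :: flat_map corners U)
           (fun y => (f y + Z.of_nat t * dlt z y + mult U y)%Z) - lsum c S f) / INR t).
  set (Lo := fun l => exists g U s, is_funion U /\ (forall y, g y <> 0%Z -> In y S) /\ (0 < s)%nat /\
    l = (lsum c S g - psum A B (S ++ z :: flat_map corners U)
           (fun y => (g y - Z.of_nat s * dlt z y + mult U y)%Z)) / INR s).
  assert (Key : forall l u, Lo l -> Up u -> l <= u).
  { intros l u [g [U' [s [HU' [Hg [Hs El]]]]]] [f [U [t [HU [Hf [Ht Eu]]]]]].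
    set (W := S ++ z :: flat_map corners U ++ flat_map corners U').
    assert (HW : Forall sq W).
    { unfold W. apply Forall_app; split; auto. constructor; auto.
      rewrite <- flat_map_app. apply corners_sq, funion_app; auto. }
    set (F := fun y => (f y + Z.of_nat t * dlt z y + mult U y)%Z).
    set (G := fun y => (g y - Z.of_nat s * dlt z y + mult U' y)%Z).
    assert (EF : psum A B (S ++ z :: flat_map corners U) F = psum A B W F).
    { apply psum_indep; unfold F, W; supp_tac. }
    assert (EG : psum A B (S ++ z :: flat_map corners U') G = psum A B W G).
    { apply psum_indep; unfold G, W; supp_tac. }
    set (U'' := rep s U ++ rep t U').
    assert (HU'' : is_funion U'') by (apply funion_app; apply funion_rep; auto).
    set (h := fun y => (Z.of_nat s * f y + Z.of_nat t * g y)%Z).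
    assert (Hh : forall y, h y <> 0%Z -> In y S).
    { intros y Hy. unfold h in Hy. destruct (Z.eq_dec (f y) 0); [|auto].
      destruct (Z.eq_dec (g y) 0); [|auto]. lia. }
    pose proof (HI h U'' HU'' Hh) as HI'.
    assert (E1 : psum A B (S ++ flat_map corners U'') (fun y => (h y + mult U'' y)%Z)
               = psum A B W (fun y => (Z.of_nat s * F y + Z.of_nat t * G y)%Z)).
    { rewrite (psum_ext A B W _ (fun y => (h y + mult U'' y)%Z)).
      2:{ intros y. unfold F, G, h, U''. rewrite mult_app, !mult_rep. ring. }
      apply psum_indep.
      - intros y Hy. unfold h, U'' in *. rewrite mult_app, !mult_rep in Hy.
        rewrite in_app_iff, flat_map_app, in_app_iff.
        destruct (Z.eq_dec (f y) 0); [|left; auto].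
        destruct (Z.eq_dec (g y) 0); [|left; auto].
        destruct (Z.eq_dec (mult U y) 0) as [|h1]; [|right; left; apply corners_rep'; auto; apply mult_supp; auto].
        destruct (Z.eq_dec (mult U' y) 0) as [|h2]; [|right; right; apply corners_rep'; auto; apply mult_supp; auto].
        rewrite e, e0, e1, e2 in Hy. lia.
      - intros y Hy. unfold h, U'' in *. rewrite mult_app, !mult_rep in Hy. unfold W.
        rewrite in_app_iff. simpl. rewrite in_app_iff.
        destruct (Z.eq_dec (f y) 0); [|left; auto].
        destruct (Z.eq_dec (g y) 0); [|left; auto].
        destruct (Z.eq_dec (mult U y) 0) as [|h1]; [|right; right; left; apply mult_supp; auto].
        destruct (Z.eq_dec (mult U' y) 0) as [|h2]; [|right; right; right; apply mult_supp; auto].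
        rewrite e, e0, e1, e2 in Hy. lia. }
    assert (E2 : lsum c S h = INR s * lsum c S f + INR t * lsum c S g).
    { unfold h. rewrite lsum_plus, !lsum_scal, <- !INR_IZR_INZ. ring. }
    pose proof (psum_sub A B W (fun y => (Z.of_nat s * F y)%Z) (fun y => (Z.of_nat t * G y)%Z) Hab HW) as Hsub.
    simpl in Hsub. rewrite !psum_scal in Hsub by auto.
    rewrite El, Eu. fold F G. rewrite EF, EG.
    apply lt_0_INR in Hs. apply lt_0_INR in Ht.
    apply div_cross; auto. nra. }
  assert (Hup : Up (psum A B (S ++ z :: flat_map corners []) (fun y => (0 + Z.of_nat 1 * dlt z y + mult [] y)%Z) / INR 1 - lsum c S (fun _ => 0%Z) / INR 1)).
  { exists (fun _ => 0%Z), [], 1%nat. split; [constructor|]. split; [intros; lia|]. split; [lia|].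
    unfold Rdiv; ring. }
  destruct (completeness Lo) as [v [Hub Hlub]].
  { eexists. intros l Hl. apply (Key l _ Hl Hup). }
  { eexists. exists (fun _ => 0%Z), [], 1%nat. split; [constructor|]. split; [intros; lia|]. split; [lia|].
    reflexivity. }
  exists v. split; [constructor; auto|].
  intros f' U HU Hf'.
  set (t := f' z). set (f := fun y => if pt_eq_dec y z then 0%Z else f' y).
  assert (Hf : forall y, f y <> 0%Z -> In y S).
  { intros y. unfold f. destruct (pt_eq_dec y z); [lia|]. intros H. destruct (Hf' y H); auto. congruence. }
  assert (Ef' : forall y, f' y = (f y + t * dlt z y)%Z).
  { intros y. unfold f, dlt, t. destruct (pt_eq_dec y z); subst; lia. }
  assert (EL : lsum (upd c z v) (z :: S) f' = lsum c S f + v * IZR t).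
  { rewrite (lsum_ext _ _ _ _ Ef'), lsum_plus, lsum_scal, lsum_dlt by (left; auto).
    unfold upd at 2. destruct (pt_eq_dec z z); [|congruence].
    rewrite (lsum_indep _ (z :: S) S) by (intros; try right; auto).
    unfold lsum. rewrite (sumS_ext S _ (fun y => c y * IZR (f y))). ring.
    intros y Hy. unfold upd. destruct (pt_eq_dec y z); congruence. }
  rewrite EL.
  set (P := psum A B ((z :: S) ++ flat_map corners U) (fun y => (f' y + mult U y)%Z)).
  destruct (Z_lt_le_dec 0 t) as [Ht|Ht]; [|destruct (Z.eq_dec t 0) as [Ht0|Ht0]].
  - set (tn := Z.to_nat t).
    assert (Etn : Z.of_nat tn = t) by (apply Z2Nat.id; lia).
    assert (Hu : Up ((P - lsum c S f) / IZR t)).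
    { exists f, U, tn. split; auto. split; auto. split; [lia|].
      rewrite INR_IZR_INZ, Etn. f_equal. f_equal. unfold P.
      rewrite (psum_ext A B _ _ (fun y => (f y + t * dlt z y + mult U y)%Z)).
      2:{ intros y. rewrite Ef'. ring. }
      apply psum_indep; supp_tac. }
    assert (Hv : v <= (P - lsum c S f) / IZR t).
    { apply Hlub. intros l Hl. apply (Key l _ Hl Hu). }
    apply div_le1 in Hv; [lra|]. apply IZR_lt; auto.
  - rewrite Ht0, Rmult_0_r, Rplus_0_r.
    eapply Rle_trans; [apply (HI f U HU Hf)|]. right. unfold P.
    rewrite (psum_ext A B _ (fun y => (f y + mult U y)%Z) (fun y => (f' y + mult U y)%Z)).
    2:{ intros y. rewrite Ef', Ht0. ring. }
    apply psum_indep; [|supp_tac].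
    intros y Hy. rewrite in_app_iff. destruct (Z.eq_dec (f' y) 0) as [e|e].
    + right; apply mult_supp; lia.
    + destruct (Hf' y e) as [<-|]; [exfalso; apply e; exact Ht0 | left; auto].
  - set (sn := Z.to_nat (- t)).
    assert (Esn : Z.of_nat sn = (- t)%Z) by (apply Z2Nat.id; lia).
    assert (Hl : Lo ((lsum c S f - P) / IZR (- t))).
    { exists f, U, sn. split; auto. split; auto. split; [lia|].
      rewrite INR_IZR_INZ, Esn. f_equal. f_equal. unfold P.
      rewrite (psum_ext A B _ _ (fun y => (f y - - t * dlt z y + mult U y)%Z)).
      2:{ intros y. rewrite Ef'. ring. }
      apply psum_indep; supp_tac. }
    pose proof (Hub _ Hl) as Hv.
    apply div_le2 in Hv; [|apply IZR_lt; lia].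
    rewrite opp_IZR in Hv. lra.
Qed.

Lemma sumS_single sp p h : (forall y, h y <> 0 -> y = p) -> In p sp -> sumS sp h = h p.
Proof.
  intros H Hp. rewrite (sumS_indep sp [p]).
  - unfold sumS, fsum. simpl. ring.
  - intros y Hy. rewrite (H y Hy). auto.
  - intros y Hy. rewrite (H y Hy). simpl; auto.
Qed.

Lemma psum_single A B sp p F : (forall y, F y <> 0%Z -> y = p) -> In p sp -> psum A B sp F = rho A B p (F p).
Proof.
  intros H Hp. unfold psum. apply (sumS_single sp p (fun y => rho A B y (F y))); auto.
  intros y Hy. apply H. intro E. rewrite E, rho0 in Hy. lra.
Qed.

Lemma Inv_D1 A B c S y : Inv A B c S -> In y S ->
  A (fst y) (snd y) <= c y <= B (fst y) (snd y).
Proof.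
  intros [HS HI] Hy. split.
  - pose proof (HI (fun x => (- dlt y x)%Z) [] ltac:(constructor)) as H.
    assert (H' : lsum c S (fun x => (- dlt y x)%Z) <= psum A B (S ++ flat_map corners []) (fun x => (- dlt y x + mult [] x)%Z)).
    { apply H. intros x Hx. unfold dlt in Hx. destruct (pt_eq_dec x y); [subst; auto|lia]. }
    rewrite lsum_opp, lsum_dlt in H' by auto.
    rewrite (psum_single _ _ _ y) in H'.
    + unfold rho, dlt in H'. simpl in H'. destruct (pt_eq_dec y y); [|congruence]. simpl in H'. lra.
    + intros x Hx. unfold dlt in Hx. simpl in Hx. destruct (pt_eq_dec x y); auto. lia.
    + rewrite app_nil_r; auto.
  - pose proof (HI (fun x => dlt y x) [] ltac:(constructor)) as H.
    assert (H' : lsum c S (fun x => dlt y x) <= psum A B (S ++ flat_map corners []) (fun x => (dlt y x + mult [] x)%Z)).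
    { apply H. intros x Hx. unfold dlt in Hx. destruct (pt_eq_dec x y); [subst; auto|lia]. }
    rewrite lsum_dlt in H' by auto.
    rewrite (psum_single _ _ _ y) in H'.
    + unfold rho, dlt in H'. simpl in H'. destruct (pt_eq_dec y y); [|congruence]. simpl in H'. lra.
    + intros x Hx. unfold dlt in Hx. simpl in Hx. destruct (pt_eq_dec x y); auto. lia.
    + rewrite app_nil_r; auto.
Qed.

Lemma Inv_D2 A B c S s1 s2 t1 t2 : Inv A B c S -> is_rect (s1, s2, t1, t2) ->
  In (s1, t1) S -> In (s2, t2) S -> In (s2, t1) S -> In (s1, t2) S ->
  c (s1, t1) + c (s2, t2) - c (s2, t1) - c (s1, t2) >= 0.
Proof.
  intros [HS HI] Hr H1 H2 H3 H4.
  set (r := (s1, s2, t1, t2)).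
  assert (HU : is_funion [r]) by (constructor; auto).
  assert (H := HI (fun y => (- mult [r] y)%Z) [r] HU).
  assert (Hinc : incl (corners r) S).
  { intros y Hy. simpl in Hy. intuition; subst; auto. }
  assert (H' : lsum c S (fun y => (- mult [r] y)%Z) <= psum A B (S ++ flat_map corners [r]) (fun y => (- mult [r] y + mult [r] y)%Z)).
  { apply H. intros y Hy. apply Hinc. apply mult_rect_supp. change (mult [r] y) with (mult_rect r y + 0)%Z in Hy. lia. }
  rewrite lsum_opp in H'.
  rewrite (lsum_ext c S _ (mult_rect r)) in H' by (intros y; change (mult [r] y) with (mult_rect r y + 0)%Z; lia).
  rewrite lsum_rect in H' by auto.
  rewrite (psum_ext A B _ _ (fun _ => 0%Z)) in H' by (intros; lia).
  unfold psum in H'. rewrite (sumS_ext _ _ (fun _ => 0)) in H' by (intros; apply rho0).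
  rewrite sumS_zero in H'. simpl in H'. lra.
Qed.

Definition ext A B (st : (pt -> R) * list pt) (z : pt) : (pt -> R) * list pt :=
  let (c, S) := st in
  if in_dec pt_eq_dec z S then (c, S)
  else (upd c z (epsilon (inhabits 0) (fun v => Inv A B (upd c z v) (z :: S))), z :: S).

Lemma ext_inv A B st z : ABok A B -> Inv A B (fst st) (snd st) -> sq z ->
  Inv A B (fst (ext A B st z)) (snd (ext A B st z)).
Proof.
  destruct st as [c S]. simpl. intros Hab HI Hz.
  destruct (in_dec pt_eq_dec z S); auto. simpl.
  apply epsilon_spec. apply step; auto.
Qed.

Lemma ext_keep A B st z y : In y (snd st) ->
  In y (snd (ext A B st z)) /\ fst (ext A B st z) y = fst st y.
Proof.
  destruct st as [c S]. simpl. intros Hy.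
  destruct (in_dec pt_eq_dec z S); simpl; auto.
  split; auto. unfold upd. destruct (pt_eq_dec y z); subst; tauto.
Qed.

Lemma ext_in A B st z : In z (snd (ext A B st z)).
Proof.
  destruct st as [c S]. simpl. destruct (in_dec pt_eq_dec z S); simpl; auto.
Qed.

Lemma fold_inv A B l st : ABok A B -> Forall sq l -> Inv A B (fst st) (snd st) ->
  Inv A B (fst (fold_left (ext A B) l st)) (snd (fold_left (ext A B) l st)).
Proof.
  intros Hab. revert st. induction l as [|z l IH]; simpl; intros st Hl H; auto.
  inversion Hl; subst. apply IH; auto. apply ext_inv; auto.
Qed.

Lemma fold_keep A B l st y : In y (snd st) ->
  In y (snd (fold_left (ext A B) l st)) /\ fst (fold_left (ext A B) l st) y = fst st y.
Proof.
  revert st. induction l as [|z l IH]; simpl; intros st H; auto.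
  destruct (ext_keep A B st z y H) as [H1 H2].
  destruct (IH _ H1) as [H3 H4]. rewrite H4, H2. auto.
Qed.

Lemma fold_in A B l st z : In z l -> In z (snd (fold_left (ext A B) l st)).
Proof.
  revert st. induction l as [|a l IH]; simpl; intros st H; [tauto|].
  destruct H as [<-|H]; auto. apply fold_keep. apply ext_in.
Qed.

Definition d (n i : nat) : R := INR i / 2 ^ n.

Definition grid (n : nat) : list pt :=
  flat_map (fun i => map (fun j => (d n i, d n j)) (seq 0 (S (Nat.pow 2 n)))) (seq 0 (S (Nat.pow 2 n))).

Lemma pow2_pos n : 0 < 2 ^ n.
Proof. apply pow_lt; lra. Qed.

Lemma INR_pow2 n : INR (Nat.pow 2 n) = 2 ^ n.
Proof. rewrite pow_INR. simpl. f_equal; lra. Qed.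

Lemma d_in01 n i : (i <= Nat.pow 2 n)%nat -> in01 (d n i).
Proof.
  intros H. unfold d, in01. pose proof (pow2_pos n). apply le_INR in H. rewrite INR_pow2 in H.
  pose proof (pos_INR i). unfold Rdiv.
  assert (0 < / 2 ^ n) by (apply Rinv_0_lt_compat; lra).
  assert (2 ^ n * / 2 ^ n = 1) by (field; lra).
  split; nra.
Qed.

Lemma grid_sq n : Forall sq (grid n).
Proof.
  apply Forall_forall. intros y Hy. unfold grid in Hy. apply in_flat_map in Hy as [i [Hi Hy]].
  apply in_map_iff in Hy as [j [<- Hj]]. apply in_seq in Hi, Hj.
  split; simpl; apply d_in01; lia.
Qed.

Lemma grid_in n i j : (i <= Nat.pow 2 n)%nat -> (j <= Nat.pow 2 n)%nat -> In (d n i, d n j) (grid n).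
Proof.
  intros Hi Hj. unfold grid. apply in_flat_map. exists i. split; [apply in_seq; lia|].
  apply in_map_iff. exists j. split; auto. apply in_seq; lia.
Qed.

Fixpoint st A B (n : nat) : (pt -> R) * list pt :=
  match n with
  | O => (fun _ => 0, [])
  | S n => fold_left (ext A B) (grid n) (st A B n)
  end.

Definition Lcond A B := forall U : funion, is_funion U -> L_AB A B U >= 0.

Lemma L_AB_psum A B U : L_AB A B U = psum A B (flat_map corners U) (mult U).
Proof. reflexivity. Qed.

Lemma st_inv A B n : ABok A B -> Lcond A B -> Inv A B (fst (st A B n)) (snd (st A B n)).
Proof.
  intros Hab HL. induction n as [|n IH].
  - simpl. split; [constructor|]. intros f U HU Hf.
    assert (Hf0 : forall y, f y = 0%Z).
    { intros y. destruct (Z.eq_dec (f y) 0); auto. destruct (Hf y n). }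
    replace (lsum (fun _ => 0) [] f) with 0 by reflexivity.
    rewrite (psum_ext A B _ _ (mult U)) by (intros; rewrite Hf0; lia).
    simpl. rewrite <- L_AB_psum. apply Rge_le, HL; auto.
  - cbn [st]. apply fold_inv; auto. apply grid_sq.
Qed.

Lemma st_keep A B m n y : (m <= n)%nat -> In y (snd (st A B m)) ->
  In y (snd (st A B n)) /\ fst (st A B n) y = fst (st A B m) y.
Proof.
  intros Hmn. induction Hmn; intros H; auto.
  destruct (IHHmn H) as [H1 H2]. cbn [st]. destruct (fold_keep A B (grid m0) (st A B m0) y H1) as [H3 H4].
  rewrite H4; auto.
Qed.

Lemma d_double n i : d n i = d (S n) (2 * i).
Proof.
  unfold d. rewrite mult_INR. simpl. pose proof (pow2_pos n). field. lra.
Qed.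

Lemma d_lift k m i : (k <= m)%nat -> (i <= Nat.pow 2 k)%nat ->
  exists i', (i' <= Nat.pow 2 m)%nat /\ d k i = d m i'.
Proof.
  intros H. induction H; intros Hi.
  - exists i; auto.
  - destruct (IHle Hi) as [i' [H1 H2]]. exists (2 * i')%nat. split.
    + simpl. lia.
    + rewrite H2. apply d_double.
Qed.

Lemma pt_in A B n k1 k2 i j : (k1 <= n)%nat -> (k2 <= n)%nat ->
  (i <= Nat.pow 2 k1)%nat -> (j <= Nat.pow 2 k2)%nat ->
  In (d k1 i, d k2 j) (snd (st A B (S n))).
Proof.
  intros H1 H2 Hi Hj. destruct (d_lift _ _ _ H1 Hi) as [i' [Hi' ->]].
  destruct (d_lift _ _ _ H2 Hj) as [j' [Hj' ->]].
  cbn [st]. apply fold_in. apply grid_in; auto.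
Qed.

Section QC.
Variable Q : R -> R -> R.
Hypothesis HQ : is_quasi_copula Q.

Lemma qc_mono_x x x' y : in01 x -> in01 x' -> in01 y -> x <= x' -> Q x y <= Q x' y.
Proof.
  destruct HQ as [Hg [Hn HV]]. intros Hx Hx' Hy Hle. unfold in01 in *.
  destruct (Req_dec x x') as [<-|Hne]; [lra|].
  destruct (Req_dec y 0) as [->|Hy0].
  - rewrite (proj1 (Hg x Hx)), (proj1 (Hg x' Hx')). lra.
  - assert (H := HV x x' 0 y ltac:(simpl; lra) ltac:(tauto)). unfold VQ in H.
    rewrite (proj1 (Hg x Hx)), (proj1 (Hg x' Hx')) in H. lra.
Qed.

Lemma qc_mono_y x y y' : in01 x -> in01 y -> in01 y' -> y <= y' -> Q x y <= Q x y'.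
Proof.
  destruct HQ as [Hg [Hn HV]]. intros Hx Hy Hy' Hle. unfold in01 in *.
  destruct (Req_dec y y') as [<-|Hne]; [lra|].
  destruct (Req_dec x 0) as [->|Hx0].
  - rewrite (proj2 (Hg y Hy)), (proj2 (Hg y' Hy')). lra.
  - assert (H := HV 0 x y y' ltac:(simpl; lra) ltac:(tauto)). unfold VQ in H.
    rewrite (proj2 (Hg y Hy)), (proj2 (Hg y' Hy')) in H. lra.
Qed.

Lemma qc_lip_x x x' y : in01 x -> in01 x' -> in01 y -> x <= x' -> Q x' y - Q x y <= x' - x.
Proof.
  destruct HQ as [Hg [Hn HV]]. intros Hx Hx' Hy Hle. unfold in01 in *.
  destruct (Req_dec x x') as [<-|Hne]; [lra|].
  destruct (Req_dec y 1) as [->|Hy1].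
  - rewrite (proj1 (Hn x Hx)), (proj1 (Hn x' Hx')). lra.
  - assert (H := HV x x' y 1 ltac:(simpl; lra) ltac:(tauto)). unfold VQ in H.
    rewrite (proj1 (Hn x Hx)), (proj1 (Hn x' Hx')) in H. lra.
Qed.

Lemma qc_lip_y x y y' : in01 x -> in01 y -> in01 y' -> y <= y' -> Q x y' - Q x y <= y' - y.
Proof.
  destruct HQ as [Hg [Hn HV]]. intros Hx Hy Hy' Hle. unfold in01 in *.
  destruct (Req_dec y y') as [<-|Hne]; [lra|].
  destruct (Req_dec x 1) as [->|Hx1].
  - rewrite (proj2 (Hn y Hy)), (proj2 (Hn y' Hy')). lra.
  - assert (H := HV x 1 y y' ltac:(simpl; lra) ltac:(tauto)). unfold VQ in H.
    rewrite (proj2 (Hn y Hy)), (proj2 (Hn y' Hy')) in H. lra.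
Qed.
End QC.

Lemma Inv_mono_x A B c S x x' y : is_quasi_copula A -> is_quasi_copula B -> Inv A B c S ->
  in01 x -> in01 x' -> in01 y -> x <= x' ->
  In (x, y) S -> In (x', y) S -> In (x, 0) S -> In (x', 0) S -> c (x, y) <= c (x', y).
Proof.
  intros [HgA _] [HgB _] HI Hx Hx' Hy Hle H1 H2 H3 H4. unfold in01 in *.
  destruct (Req_dec x x') as [<-|Hne]; [lra|].
  assert (E3 := Inv_D1 A B c S _ HI H3). assert (E4 := Inv_D1 A B c S _ HI H4). simpl in E3, E4.
  rewrite (proj1 (HgA x Hx)), (proj1 (HgB x Hx)) in E3.
  rewrite (proj1 (HgA x' Hx')), (proj1 (HgB x' Hx')) in E4.
  destruct (Req_dec y 0) as [->|Hy0]; [lra|].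
  assert (H := Inv_D2 A B c S x x' 0 y HI ltac:(simpl; lra) H3 H2 H4 H1). lra.
Qed.

Lemma Inv_mono_y A B c S x y y' : is_quasi_copula A -> is_quasi_copula B -> Inv A B c S ->
  in01 x -> in01 y -> in01 y' -> y <= y' ->
  In (x, y) S -> In (x, y') S -> In (0, y) S -> In (0, y') S -> c (x, y) <= c (x, y').
Proof.
  intros [HgA _] [HgB _] HI Hx Hy Hy' Hle H1 H2 H3 H4. unfold in01 in *.
  destruct (Req_dec y y') as [<-|Hne]; [lra|].
  assert (E3 := Inv_D1 A B c S _ HI H3). assert (E4 := Inv_D1 A B c S _ HI H4). simpl in E3, E4.
  rewrite (proj2 (HgA y Hy)), (proj2 (HgB y Hy)) in E3.
  rewrite (proj2 (HgA y' Hy')), (proj2 (HgB y' Hy')) in E4.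
  destruct (Req_dec x 0) as [->|Hx0]; [lra|].
  assert (H := Inv_D2 A B c S 0 x y y' HI ltac:(simpl; lra) H3 H2 H1 H4). lra.
Qed.

Fixpoint idx (n : nat) (x : R) : nat :=
  match n with
  | O => if Rle_dec 1 x then 1%nat else 0%nat
  | S n => let i := idx n x in
           if Rle_dec (d (S n) (2 * i + 1)) x then (2 * i + 1)%nat else (2 * i)%nat
  end.

Definition fl (n : nat) (x : R) : R := d n (idx n x).

Lemma d_odd n i : d (S n) (2 * i + 1) = d n i + / 2 ^ (S n).
Proof. unfold d. rewrite plus_INR, mult_INR. simpl. pose proof (pow2_pos n). field. lra. Qed.

Lemma d_even1 n i : d n i + / 2 ^ n = d (S n) (2 * i + 1) + / 2 ^ (S n).
Proof. rewrite d_odd. simpl. pose proof (pow2_pos n). field. lra. Qed.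

Lemma idx_spec n x : in01 x ->
  (idx n x <= Nat.pow 2 n)%nat /\ fl n x <= x /\ x <= fl n x + / 2 ^ n.
Proof.
  intros Hx. unfold fl. induction n as [|n IH].
  - simpl. unfold d, in01 in *. simpl. destruct (Rle_dec 1 x); simpl; split; try lia; lra.
  - destruct IH as [H1 [H2 H3]]. cbn [idx]. set (i := idx n x) in *.
    destruct (Rle_dec (d (S n) (2 * i + 1)) x) as [h|h].
    + split; [|split; auto].
      * assert (INR (2 * i + 1) <= INR (Nat.pow 2 (S n))).
        { unfold d in h. rewrite INR_pow2. unfold in01 in Hx. pose proof (pow2_pos (S n)).
          apply (Rmult_le_compat_r (2 ^ S n)) in h; [|lra].
          unfold Rdiv in h. rewrite Rmult_assoc, Rinv_l in h; [nra|lra]. }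
        apply INR_le; auto.
      * rewrite <- d_even1; auto.
    + split; [simpl; lia|]. rewrite <- d_double. split; auto.
      rewrite d_odd in h. lra.
Qed.

Lemma fl_mono_n n x : fl n x <= fl (S n) x.
Proof.
  unfold fl. cbn [idx]. rewrite (d_double n). destruct (Rle_dec _ x); [|lra].
  unfold d. apply Rmult_le_compat_r; [left; apply Rinv_0_lt_compat, pow2_pos|].
  apply le_INR. lia.
Qed.

Lemma idx_mono n x x' : x <= x' -> (idx n x <= idx n x')%nat.
Proof.
  intros H. induction n as [|n IH]; cbn [idx].
  - destruct (Rle_dec 1 x), (Rle_dec 1 x'); lia || lra.
  - destruct (Nat.eq_dec (idx n x) (idx n x')) as [E|E].
    + rewrite E. destruct (Rle_dec _ x), (Rle_dec _ x'); try lia. lra.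
    + destruct (Rle_dec _ x), (Rle_dec _ x'); lia.
Qed.

Lemma fl_mono n x x' : x <= x' -> fl n x <= fl n x'.
Proof.
  intros H. unfold fl, d. apply Rmult_le_compat_r; [left; apply Rinv_0_lt_compat, pow2_pos|].
  apply le_INR, idx_mono; auto.
Qed.

Lemma fl_in01 n x : in01 x -> in01 (fl n x).
Proof. intros H. apply d_in01. apply idx_spec; auto. Qed.

Lemma d00 k : d k 0 = 0.
Proof. unfold d. simpl. unfold Rdiv. ring. Qed.

Lemma fl_in A B n k1 k2 x y : in01 x -> in01 y -> (k1 <= n)%nat -> (k2 <= n)%nat ->
  In (fl k1 x, fl k2 y) (snd (st A B (S n))).
Proof. intros. apply pt_in; auto; apply idx_spec; auto. Qed.

Lemma fl_in_x0 A B n k x : in01 x -> (k <= n)%nat -> In (fl k x, 0) (snd (st A B (S n))).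
Proof. intros. rewrite <- (d00 0). apply pt_in; try lia. apply idx_spec; auto. Qed.

Lemma fl_in_0y A B n k y : in01 y -> (k <= n)%nat -> In (0, fl k y) (snd (st A B (S n))).
Proof. intros. rewrite <- (d00 0). apply pt_in; try lia. apply idx_spec; auto. Qed.

Definition a A B (n : nat) (x y : R) : R := fst (st A B (S n)) (fl n x, fl n y).

Section Main.
Variables A B : R -> R -> R.
Hypothesis HA : is_quasi_copula A.
Hypothesis HB : is_quasi_copula B.
Hypothesis Hab : ABok A B.
Hypothesis HL : Lcond A B.

Lemma a_mono n x y : in01 x -> in01 y -> a A B n x y <= a A B (S n) x y.
Proof.
  intros Hx Hy. unfold a.
  assert (Hk : In (fl n x, fl n y) (snd (st A B (S n)))) by (apply fl_in; auto).
  destruct (st_keep A B (S n) (S (S n)) _ ltac:(lia) Hk) as [_ <-].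
  pose proof (st_inv A B (S (S n)) Hab HL) as HI.
  apply Rle_trans with (fst (st A B (S (S n))) (fl (S n) x, fl n y)).
  - apply (Inv_mono_x A B _ _ _ _ _ HA HB HI); try apply fl_in01; auto; try apply fl_mono_n;
      try apply fl_in; try apply fl_in_x0; auto; lia.
  - apply (Inv_mono_y A B _ _ _ _ _ HA HB HI); try apply fl_in01; auto; try apply fl_mono_n;
      try apply fl_in; try apply fl_in_0y; auto; lia.
Qed.

Lemma a_mono_le N n x y : in01 x -> in01 y -> (N <= n)%nat -> a A B N x y <= a A B n x y.
Proof.
  intros Hx Hy H. induction H; [lra|]. eapply Rle_trans; [apply IHle|]. apply a_mono; auto.
Qed.

Lemma a_le_B n x y : in01 x -> in01 y -> a A B n x y <= B x y.
Proof.
  intros Hx Hy. unfold a.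
  pose proof (st_inv A B (S n) Hab HL) as HI.
  pose proof (Inv_D1 A B _ _ _ HI (fl_in A B n n n x y Hx Hy ltac:(lia) ltac:(lia))) as [_ H]. simpl in H.
  destruct (idx_spec n x Hx) as [_ [Hx1 _]]. destruct (idx_spec n y Hy) as [_ [Hy1 _]].
  eapply Rle_trans; [apply H|].
  eapply Rle_trans; [apply (qc_mono_x B HB _ x); auto; apply fl_in01; auto|].
  apply qc_mono_y; auto. apply fl_in01; auto.
Qed.

Lemma A_le_a n x y : in01 x -> in01 y -> A x y - 2 * / 2 ^ n <= a A B n x y.
Proof.
  intros Hx Hy. unfold a.
  pose proof (st_inv A B (S n) Hab HL) as HI.
  pose proof (Inv_D1 A B _ _ _ HI (fl_in A B n n n x y Hx Hy ltac:(lia) ltac:(lia))) as [H _]. cbn [fst snd] in H.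
  destruct (idx_spec n x Hx) as [_ [Hx1 Hx2]]. destruct (idx_spec n y Hy) as [_ [Hy1 Hy2]].
  pose proof (qc_lip_x A HA (fl n x) x y (fl_in01 n x Hx) Hx Hy Hx1).
  pose proof (qc_lip_y A HA (fl n x) (fl n y) y (fl_in01 n x Hx) (fl_in01 n y Hy) Hy Hy1).
  lra.
Qed.

Definition Cf (x y : R) : R :=
  epsilon (inhabits 0) (fun l => is_lub (fun r => exists n, r = a A B n x y) l).

Lemma C_lub x y : in01 x -> in01 y -> is_lub (fun r => exists n, r = a A B n x y) (Cf x y).
Proof.
  intros Hx Hy. unfold Cf. apply epsilon_spec.
  destruct (completeness (fun r => exists n, r = a A B n x y)) as [l Hl].
  - exists (B x y). intros r [n ->]. apply a_le_B; auto.
  - exists (a A B 0 x y). exists 0%nat. auto.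
  - exists l; auto.
Qed.

Lemma C_approx x y e : in01 x -> in01 y -> 0 < e ->
  exists N, forall n, (N <= n)%nat -> Cf x y - e < a A B n x y.
Proof.
  intros Hx Hy He. destruct (C_lub x y Hx Hy) as [Hub Hlub].
  destruct (classic (exists N, Cf x y - e < a A B N x y)) as [[N HN]|Hno].
  - exists N. intros n Hn. eapply Rlt_le_trans; [apply HN|]. apply a_mono_le; auto.
  - exfalso. assert (Cf x y <= Cf x y - e); [|lra].
    apply Hlub. intros r [n ->]. apply Rnot_lt_le. intro H. apply Hno. exists n; auto.
Qed.

Lemma INR_lt_pow2 n : INR n < 2 ^ n.
Proof.
  induction n; [simpl; lra|]. rewrite S_INR. change (2 ^ S n) with (2 * 2 ^ n).
  assert (1 <= 2 ^ n) by (apply pow_R1_Rle; lra). lra.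
Qed.

Lemma eps_pow e : 0 < e -> exists n, 2 * / 2 ^ n < e.
Proof.
  intros He. destruct (archimed_cor1 (e / 2) ltac:(lra)) as [N [HN HN0]].
  exists N. pose proof (INR_lt_pow2 N). apply lt_0_INR in HN0.
  assert (/ 2 ^ N < / INR N) by (apply Rinv_lt_contravar; nra). lra.
Qed.

Lemma Vn_ge n s1 s2 t1 t2 : is_rect (s1, s2, t1, t2) ->
  a A B n s1 t1 + a A B n s2 t2 - a A B n s2 t1 - a A B n s1 t2 >= 0.
Proof.
  intros Hr. simpl in Hr.
  assert (Hs1 : in01 s1) by (unfold in01; lra). assert (Hs2 : in01 s2) by (unfold in01; lra).
  assert (Ht1 : in01 t1) by (unfold in01; lra). assert (Ht2 : in01 t2) by (unfold in01; lra).
  unfold a.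
  pose proof (fl_mono n s1 s2 ltac:(lra)). pose proof (fl_mono n t1 t2 ltac:(lra)).
  destruct (Req_dec (fl n s1) (fl n s2)) as [E|E].
  { rewrite E. lra. }
  destruct (Req_dec (fl n t1) (fl n t2)) as [E'|E'].
  { rewrite E'. lra. }
  pose proof (st_inv A B (S n) Hab HL) as HI.
  pose proof (fl_in01 n s1 Hs1). pose proof (fl_in01 n s2 Hs2).
  pose proof (fl_in01 n t1 Ht1). pose proof (fl_in01 n t2 Ht2). unfold in01 in *.
  apply (Inv_D2 A B _ _ _ _ _ _ HI); try (simpl; lra); apply fl_in; auto.
Qed.

Lemma C_copula : is_copula (fun x y => Cf x y) /\ le01 A (fun x y => Cf x y) /\ le01 (fun x y => Cf x y) B.
Proof.
  assert (HAC : le01 A (fun x y => Cf x y)).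
  { intros x y Hx Hy. destruct (C_lub x y Hx Hy) as [Hub _].
    apply Rnot_lt_le. intro H. destruct (eps_pow (A x y - Cf x y) ltac:(lra)) as [n Hn].
    pose proof (A_le_a n x y Hx Hy). assert (a A B n x y <= Cf x y) by (apply Hub; exists n; auto).
    lra. }
  assert (HCB : le01 (fun x y => Cf x y) B).
  { intros x y Hx Hy. destruct (C_lub x y Hx Hy) as [_ Hlub]. apply Hlub.
    intros r [n ->]. apply a_le_B; auto. }
  split; [|split; auto].
  destruct HA as [HgA [HnA _]]. destruct HB as [HgB [HnB _]].
  split; [|split].
  - intros x Hx. assert (H0 : in01 0) by (unfold in01; lra).
    pose proof (HAC x 0 Hx H0). pose proof (HCB x 0 Hx H0).
    pose proof (HAC 0 x H0 Hx). pose proof (HCB 0 x H0 Hx).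
    destruct (HgA x Hx), (HgB x Hx). split; lra.
  - intros x Hx. assert (H1 : in01 1) by (unfold in01; lra).
    pose proof (HAC x 1 Hx H1). pose proof (HCB x 1 Hx H1).
    pose proof (HAC 1 x H1 Hx). pose proof (HCB 1 x H1 Hx).
    destruct (HnA x Hx), (HnB x Hx). split; lra.
  - intros s1 s2 t1 t2 Hr. unfold VQ.
    assert (Hr' := Hr). simpl in Hr'.
    assert (Hs1 : in01 s1) by (unfold in01; lra). assert (Hs2 : in01 s2) by (unfold in01; lra).
    assert (Ht1 : in01 t1) by (unfold in01; lra). assert (Ht2 : in01 t2) by (unfold in01; lra).
    apply Rle_ge, Rnot_lt_le. intro Hneg.
    set (e := - (Cf s1 t1 + Cf s2 t2 - Cf s2 t1 - Cf s1 t2) / 4).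
    assert (He : 0 < e) by (unfold e; lra).
    destruct (C_approx s2 t1 e Hs2 Ht1 He) as [N1 HN1].
    destruct (C_approx s1 t2 e Hs1 Ht2 He) as [N2 HN2].
    set (n := Nat.max N1 N2).
    pose proof (HN1 n ltac:(lia)). pose proof (HN2 n ltac:(lia)).
    pose proof (Vn_ge n s1 s2 t1 t2 Hr).
    destruct (C_lub s1 t1 Hs1 Ht1) as [Hub1 _]. destruct (C_lub s2 t2 Hs2 Ht2) as [Hub2 _].
    assert (a A B n s1 t1 <= Cf s1 t1) by (apply Hub1; exists n; auto).
    assert (a A B n s2 t2 <= Cf s2 t2) by (apply Hub2; exists n; auto).
    unfold e in *. lra.
Qed.
End Main.

Lemma lsum_copula C U sp : is_copula C -> is_funion U -> incl (flat_map corners U) sp ->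
  lsum (fun y => C (fst y) (snd y)) sp (mult U) >= 0.
Proof.
  intros [_ [_ HV]]. induction U as [|r U IH]; intros HU Hinc.
  - unfold lsum. rewrite (sumS_ext _ _ (fun _ => 0)) by (intros; simpl; ring). rewrite sumS_zero. lra.
  - inversion HU; subst.
    rewrite (lsum_ext _ sp _ (fun y => (mult_rect r y + mult U y)%Z)) by reflexivity.
    rewrite lsum_plus. assert (IH' := IH H2 ltac:(intros y Hy; apply Hinc; simpl; apply in_or_app; auto)).
    rewrite lsum_rect by (intros y Hy; apply Hinc; simpl; apply in_or_app; auto).
    destruct r as [[[s1 s2] t1] t2]. simpl. pose proof (HV s1 s2 t1 t2 H1). unfold VQ in H. lra.
Qed.

Theorem mainTheorem15 (A B : R -> R -> R) :
  is_quasi_copula A -> is_quasi_copula B -> le01 A B ->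
  ((exists C : R -> R -> R, is_copula C /\ le01 A C /\ le01 C B) <->
   (forall U : funion, is_funion U -> L_AB A B U >= 0)).
Proof.
  intros HA HB HAB.
  assert (Hab : ABok A B) by (intros y [h1 h2]; apply HAB; auto).
  split.
  - intros [C [HC [HAC HCB]]] U HU. rewrite L_AB_psum.
    apply Rle_ge. eapply Rle_trans; [apply Rge_le, (lsum_copula C U (flat_map corners U)); auto; apply incl_refl|].
    apply sumS_le. intros y Hy. apply rho_ge.
    + pose proof (Forall_forall sq (flat_map corners U)) as [F _]. destruct (F (corners_sq U HU) y Hy). apply HAC; auto.
    + pose proof (Forall_forall sq (flat_map corners U)) as [F _]. destruct (F (corners_sq U HU) y Hy). apply HCB; auto.
  - intros HL. exists (fun x y => Cf A B x y). apply C_copula; auto.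
Qed.
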